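(* Let $\mathbf{w}$ be a non-empty finite or infinite LSP word. Then there exist a bLSP morphism $f$ on ${\rm alph}(\mathbf{w})$ and a word $\mathbf{w}'$ (finite if $\mathbf{w}$ is finite, infinite if $\mathbf{w}$ is infinite) such that $\mathbf{w}=f(\mathbf{w}')$.
   Context: A finite word $u$ is a left special factor of a word $w$ if there are distinct letters $x\neq y$ with $xu$ and $yu$ factors of $w$. A word is LSP if every left special factor of it is a prefix of it. ${\rm alph}(w)$ denotes the set of letters occurring in $w$. A bLSP morphism on an alphabet $B$ is an endomorphism $f$ of $B^*$ such that there is a letter $\alpha\in B$ with $f(\alpha)=\alpha$ and, for every letter $\beta\neq\alpha$, there is a letter $\gamma$ with $f(\beta)=f(\gamma)\beta$. *)

(* Defs.v *)
From mathcomp Require Import all_boot.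
Set Implicit Arguments. Unset Strict Implicit. Unset Printing Implicit Defensive.

Definition factor_fin (T : eqType) (w u : seq T) : Prop := infix u w.
Definition left_special_fin (T : eqType) (w u : seq T) : Prop :=
  exists x y : T, x <> y /\ factor_fin w (x :: u) /\ factor_fin w (y :: u).
Definition LSP_fin (T : eqType) (w : seq T) : Prop :=
  forall u : seq T, left_special_fin w u -> prefix u w.
Definition alph_fin (T : eqType) (w : seq T) : T -> Prop := fun x => x \in w.

Definition factor_inf (T : Type) (w : nat -> T) (u : seq T) : Prop :=
  exists i, forall j, j < size u -> forall d, w (i + j) = nth d u j.
Definition prefix_inf (T : Type) (w : nat -> T) (u : seq T) : Prop :=
  forall j, j < size u -> forall d, w j = nth d u j.
Definition left_special_inf (T : Type) (w : nat -> T) (u : seq T) : Prop :=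
  exists x y : T, x <> y /\ factor_inf w (x :: u) /\ factor_inf w (y :: u).
Definition LSP_inf (T : Type) (w : nat -> T) : Prop :=
  forall u : seq T, left_special_inf w u -> prefix_inf w u.
Definition alph_inf (T : Type) (w : nat -> T) : T -> Prop := fun x => exists i, w i = x.

(* An endomorphism of B^* is given by the images of the letters of B, which
   must be words over B; it acts on words by concatenation of images. *)
Definition bLSP_morphism (T : eqType) (B : T -> Prop) (f : T -> seq T) : Prop :=
  (forall b, B b -> forall c, c \in f b -> B c) /\
  exists alpha, B alpha /\ f alpha = [:: alpha] /\
    forall beta, B beta -> beta <> alpha ->
      exists gamma, B gamma /\ f beta = f gamma ++ [:: beta].

Definition morph_fin (T : Type) (f : T -> seq T) (w : seq T) : seq T :=
  flatten (map f w).

(* w = f(w') for an infinite word w': for every n, the image of the length-n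
   prefix of w' is a prefix of w (images are nonempty for bLSP morphisms, so
   this determines w). *)
Definition morph_inf_eq (T : Type) (f : T -> seq T) (w' w : nat -> T) : Prop :=
  forall n, prefix_inf w (morph_fin f (mkseq w' n)).

(* Main.v *)
From Stdlib Require Import Classical ClassicalEpsilon.
Require Import Defs.
From mathcomp Require Import all_boot.
Set Implicit Arguments. Unset Strict Implicit. Unset Printing Implicit Defensive.

Section Blocks.
Variable T : eqType.
Variable W : nat -> T.

Fixpoint st j := match j with 0 => 0 | i.+1 => if W i.+1 == W 0 then i.+1 else st i end.
Definition blk j := map W (iota (st j) (j.+1 - st j)).

Lemma st_le j : st j <= j.
Proof. elim: j => //= i IH; case: ifP => // _; exact: leqW. Qed.

Lemma blk_alpha j : W j = W 0 -> blk j = [:: W 0].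
Proof.
rewrite /blk; case: j => [|i] /= H; first by [].
by rewrite H eqxx subSnn /= H.
Qed.

Lemma blk_S i : W i.+1 != W 0 -> blk i.+1 = rcons (blk i) (W i.+1).
Proof.
move=> H; rewrite /blk /= (negbTE H) -map_rcons.
have Hs := st_le i.
rewrite subSn; last by apply: leqW.
by rewrite -addn1 iotaD cats1 subnKC // leqW.
Qed.

Definition Pn N := forall j j', 0 < j -> 0 < j' -> j < N -> j' < N ->
  W j = W j' -> W j != W 0 -> W j.-1 = W j'.-1.

Lemma key N : Pn N -> forall j j', j < N -> j' < N -> W j = W j' -> blk j = blk j'.
Proof.
move=> HP; elim=> [|i IH] j' Hj Hj' E.
  by rewrite blk_alpha // blk_alpha.
case: (eqVneq (W i.+1) (W 0)) => Ha.
  by rewrite blk_alpha // blk_alpha // -E.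
case: j' Hj' E => [|i'] Hj' E; first by rewrite E eqxx in Ha.
have Hi := HP _ _ (ltn0Sn i) (ltn0Sn i') Hj Hj' E Ha; simpl in Hi.
rewrite blk_S // blk_S; last by rewrite -E.
by rewrite (IH i') ?E // ltnW.
Qed.

Lemma blk_mem j c : c \in blk j -> exists2 k, k <= j & W k = c.
Proof.
case/mapP=> k; rewrite mem_iota subnKC; last by apply: leqW; exact: st_le.
by case/andP=> _ Hk ->; exists k.
Qed.

Definition D m := flatten [seq blk j | j <- iota 0 m & W j.+1 == W 0].

Lemma D_blk m : D m ++ blk m = map W (iota 0 m.+1).
Proof.
elim: m => [|m IH]; first by rewrite /D /blk /=.
have E1 : iota 0 m.+1 = iota 0 m ++ [:: m] by rewrite -addn1 iotaD.
have E2 : iota 0 m.+2 = iota 0 m.+1 ++ [:: m.+1] by rewrite -[m.+2]addn1 iotaD.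
have -> : D m.+1 = D m ++ (if W m.+1 == W 0 then blk m else [::]).
  rewrite /D E1 filter_cat map_cat flatten_cat /=.
  by case: (W m.+1 == W 0); rewrite /= ?cats0.
rewrite E2 map_cat -IH.
case: (eqVneq (W m.+1) (W 0)) => Ha.
  by rewrite (@blk_alpha m.+1) // /= Ha.
by rewrite cats0 (@blk_S m) // -cats1 catA.
Qed.

End Blocks.

Lemma bLSP_gen (T : eqType) (W : nat -> T) N (g : T -> nat) (B : T -> Prop) :
  Pn W N -> (forall x, B x -> g x < N /\ W (g x) = x) ->
  (forall k, k < N -> B (W k)) -> B (W 0) ->
  bLSP_morphism B (fun x => blk W (g x)).
Proof.
move=> HP hg hB h0; split.
  move=> b Bb c /blk_mem [k Hk <-]; apply: hB.
  case: (hg b Bb) => Hn _; exact: leq_ltn_trans Hk Hn.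
exists (W 0); split=> //; split.
  case: (hg _ h0) => Hn E.
  rewrite (key HP Hn (leq_ltn_trans (leq0n _) Hn) E); exact: blk_alpha.
move=> beta Bb ne.
case: (hg _ Bb) => Hn E.
case Hi: (g beta) Hn E => [|i] Hn E; first by rewrite -E in ne.
exists (W i); split; first by apply: hB; apply: ltnW.
have Bg : B (W i) by apply: hB; apply: ltnW.
case: (hg _ Bg) => Hn' E'.
rewrite blk_S; last by rewrite E; apply/eqP.
by rewrite -cats1 E (key HP Hn' (ltnW Hn) E').
Qed.

Lemma infix2 (T : eqType) (w : seq T) a i : i.+1 < size w ->
  infix [:: nth a w i; nth a w i.+1] w.
Proof.
move=> H; apply/infixP; exists (take i w), (drop i.+2 w).
rewrite -{1}(cat_take_drop i w) (drop_nth a) ?(ltnW H) // (drop_nth a) //.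
Qed.

Lemma fin_case (T : eqType) (w : seq T) : w <> [::] -> LSP_fin w ->
     exists f : T -> seq T, bLSP_morphism (alph_fin w) f /\
       exists w' : seq T, (forall x, x \in w' -> alph_fin w x) /\ w = morph_fin f w'.
Proof.
case: w => [//|a s] _ HL; set w := a :: s; set W := nth a w.
have HP : Pn W (size w).
  move=> [//|j] [//|j'] _ _ Hjn Hjn' E Ha /=.
  case: (eqVneq (W j) (W j')) => // Hne; exfalso.
  have : prefix [:: W j.+1] w.
    apply: HL; exists (W j), (W j'); split; first by apply/eqP.
    split; first by apply: infix2.
    by rewrite E; apply: infix2.
  case/prefixP=> s2 [] Eh _; by rewrite -/W -Eh /W /= eqxx in Ha.
have hg : forall x, alph_fin w x -> index x w < size w /\ W (index x w) = x.
  by move=> x Hx; rewrite index_mem /W nth_index.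
exists (fun x => blk W (index x w)); split.
  apply: bLSP_gen HP hg _ _; last by rewrite /alph_fin /W /= mem_head.
  by move=> k Hk; rewrite /alph_fin /W mem_nth.
have fW : forall j, j < size w -> blk W (index (W j) w) = blk W j.
  move=> j Hj; apply: (key HP) => //; first by rewrite index_mem mem_nth.
  by rewrite /W nth_index // mem_nth.
exists ([seq W j | j <- iota 0 (size s) & W j.+1 == W 0] ++ [:: W (size s)]).
split.
  move=> x; rewrite mem_cat mem_seq1 => /orP [/mapP [j] | /eqP ->].
    rewrite mem_filter mem_iota => /andP [_ /andP [_ Hj]] ->.
    by rewrite /alph_fin /W mem_nth // ltnS ltnW.
  by rewrite /alph_fin /W mem_nth.
rewrite /morph_fin map_cat flatten_cat /= cats0 -map_comp.
set L := filter _ _.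
have -> : map ((fun x => blk W (index x w)) \o W) L = map (blk W) L.
  apply/eq_in_map => j; rewrite mem_filter mem_iota => /andP [_ /andP [_ Hj]] /=.
  by apply: fW; rewrite /= ltnS ltnW.
by rewrite -/(D W (size s)) (fW (size s)) // D_blk -/(mkseq W (size w)) mkseq_nth.
Qed.

From mathcomp Require Import zify.

Section Inf.
Variable T : finType.
Variable W : nat -> T.
Hypothesis HP : forall N, Pn W N.

Lemma st_const j : (forall k, j < k -> W k != W 0) ->
  forall k, j <= k -> st W k = st W j.
Proof.
move=> H; elim=> [|k IH]; first by rewrite leqn0 => /eqP ->.
rewrite leq_eqVlt => /orP [/eqP <- // | Hk] /=.
by rewrite (negbTE (H _ Hk)) IH.
Qed.

Lemma size_blk k : size (blk W k) = k.+1 - st W k.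
Proof. by rewrite /blk size_map size_iota. Qed.

Lemma inf_alpha j : exists k, (j < k) && (W k == W 0).
Proof.
apply: NNPP => Hn.
have H : forall k, j < k -> W k != W 0.
  move=> k Hk; apply/negP => /eqP E; apply: Hn; exists k; by rewrite Hk E eqxx.
set s := map W (iota j.+1 #|T|.+1).
have Hs : size s = #|T|.+1 by rewrite size_map size_iota.
have : ~~ uniq s.
  apply/negP => /card_uniqP U.
  have := max_card (mem s); by rewrite U Hs ltnn.
case/(uniqPn (W 0)) => i [i' [Hii' Hi' E]].
rewrite Hs in Hi'.
rewrite !(nth_map 0) ?size_iota ?(ltn_trans Hii' Hi') // !nth_iota // in E;
  last exact: ltn_trans Hii' Hi'.
have := @key _ W _ (@HP (j + i'.+2)) (j.+1 + i) (j.+1 + i').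
move=> /(_ ltac:(lia) ltac:(lia) E) /(congr1 size).
rewrite !size_blk !(st_const H).
all: have := st_le W j; lia.
Qed.

Definition nxt j := ex_minn (inf_alpha j).

Lemma nxtP j : [/\ j < nxt j, W (nxt j) = W 0 &
  forall k, j < k -> k < nxt j -> W k != W 0].
Proof.
rewrite /nxt; case: ex_minnP => m /andP [Hm /eqP E] Hmin; split => // k Hk Hk'.
apply/negP => /eqP Ek; have := Hmin k; rewrite Hk Ek eqxx => /(_ isT).
by rewrite leqNgt Hk'.
Qed.

Fixpoint apos n := if n is n'.+1 then nxt (apos n') else 0.
Definition w' n := W (apos n.+1).-1.

Lemma C n : mkseq w' n = [seq W j | j <- iota 0 (apos n) & W j.+1 == W 0].
Proof.
elim: n => [//|n IH].
rewrite /mkseq -addn1 iotaD map_cat -/(mkseq w' n) IH /=.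
case: (nxtP (apos n)) => Hlt Ea Hmin.
have [d Hd] : exists d, nxt (apos n) = apos n + d.+1.
  by exists (nxt (apos n) - apos n).-1; lia.
have -> : apos (n + 1) = nxt (apos n) by rewrite addn1.
rewrite add0n Hd -addn1 addnA iotaD filter_cat map_cat iotaD filter_cat map_cat.
have -> : [seq j <- iota (apos n) d | W j.+1 == W 0] = [::].
  rewrite -(filter_pred0 (iota (apos n) d)); apply: eq_in_filter => k.
  rewrite mem_iota => /andP [H1 H2]; apply/negbTE; apply: Hmin; lia.
rewrite /= add0n -addnS -Hd Ea eqxx /= cats0 /w' /=.
by rewrite Hd addnS.
Qed.

End Inf.

Lemma inf_case (T : finType) (w : nat -> T) : LSP_inf w ->
     exists f : T -> seq T, bLSP_morphism (alph_inf w) f /\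
       exists w' : nat -> T, (forall i, alph_inf w (w' i)) /\ morph_inf_eq f w' w.
Proof.
move=> HL.
have HP : forall N, Pn w N.
  move=> N [//|j] [//|j'] _ _ _ _ E Ha /=.
  case: (eqVneq (w j) (w j')) => // Hne; exfalso.
  have : prefix_inf w [:: w j.+1].
    apply: HL; exists (w j), (w j'); split; first by apply/eqP.
    split; [exists j | exists j']; move=> [|[|k]] // _ d /=; by rewrite ?addn0 ?addn1 ?E.
  move=> /(_ 0 isT (w 0)) /= E0; by rewrite -E0 eqxx in Ha.
have Hg : forall x, exists k, alph_inf w x -> w k = x.
  move=> x; case: (classic (alph_inf w x)) => [[k Hk]|Hn]; [by exists k | by exists 0].
pose g x := proj1_sig (constructive_indefinite_description _ (Hg x)).
have hg : forall x, alph_inf w x -> w (g x) = x.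
  by move=> x; rewrite /g; case: constructive_indefinite_description.
pose N := \max_(x : T) (g x).+1.
have gN : forall x, g x < N by move=> x; exact: (leq_bigmax x).
exists (fun x => blk w (g x)); split.
  apply: (bLSP_gen (@HP N)) => [x Hx|k _|]; [by split; [apply gN | apply hg] | by exists k | by exists 0].
have fW : forall j, blk w (g (w j)) = blk w j.
  move=> j; apply: (@key _ _ _ (@HP (maxn (g (w j)) j).+1)); try lia.
  by apply: hg; exists j.
exists (w' HP); split; first by move=> i; exists ((apos HP i.+1).-1).
move=> n; rewrite /morph_fin (C HP) -map_comp (eq_map fW) -/(D w (apos HP n)).
move=> j Hj d.
have E := D_blk w (apos HP n).
have Hj' : j < (apos HP n).+1.
  have sz := congr1 size E; rewrite size_cat size_map size_iota in sz; by rewrite -sz ltn_addr.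
have -> : nth d (D w (apos HP n)) j = nth d (map w (iota 0 (apos HP n).+1)) j by rewrite -E nth_cat Hj.
by rewrite (nth_map 0) ?size_iota // nth_iota.
Qed.

Theorem lemma1 (T : finType) :
  (forall w : seq T, w <> [::] -> LSP_fin w ->
     exists f : T -> seq T, bLSP_morphism (alph_fin w) f /\
       exists w' : seq T, (forall x, x \in w' -> alph_fin w x) /\ w = morph_fin f w')
  /\
  (forall w : nat -> T, LSP_inf w ->
     exists f : T -> seq T, bLSP_morphism (alph_inf w) f /\
       exists w' : nat -> T, (forall i, alph_inf w (w' i)) /\ morph_inf_eq f w' w).
Proof. split; [exact: fin_case | exact: inf_case]. Qed.
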